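(* Let $\mathcal L$ be a finite relational language, $\mathcal H$ a hereditary $\mathcal L$-property, and $\{(\mathcal L_i,\mathcal H_i,\alpha_i):i\in[m]\}$ ($m\ge1$) a totally bounded cover of $\mathcal H$. Let $c=\max\{|\mathcal L_j|:j\in[m]\}$, where $|\mathcal L_j|$ is the number of symbols of $\mathcal L_j$. Then for all sufficiently large $n$, $$n^{-c}\max\{|(\mathcal H_j)_n|:j\in[m]\}\le|\mathcal H_n|\le\sum_{j\in[m]}|(\mathcal H_j)_n|.$$
   Context: A hereditary property (in any finite language) is a class of structures closed under isomorphism and substructures; $\mathcal H_n$ denotes its members with universe $[n]$; it is trivial if $\mathcal H_n=\emptyset$ for all large $n$. Totally bounded: there is $k$ such that in every member, for every relation symbol $R(x_1,\dots,x_s)$ and every partition $[s]=I\cup J$ into nonempty sets, each assignment of $\bar x_I$ has fewer than $k$ extensions to $\bar x_J$ satisfying $R$. A relational interpretation $\alpha:\mathcal L\to\mathcal L'$ assigns to each relation symbol $R(\bar x)$ of $\mathcal L$ a Boolean combination $\alpha(R)(\bar x)$ of atomic formulas built from relation symbols of $\mathcal L'$ and variables in $\bar x$; for an $\mathcal L'$-structure $\mathcal N'$, $\overline\alpha(\mathcal N')$ is the $\mathcal L$-structure with the same universe in which each $R$ is interpreted as the set defined by $\alpha(R)$ in $\mathcal N'$. For a hereditary $\mathcal L'$-property $\mathcal H'$, $\overline\alpha$ is a relational interpretation of $\mathcal H'$ in $\mathcal H$ if $\overline\alpha(\mathcal N')\in\mathcal H$ for all $\mathcal N'\in\mathcal H'$,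 and for all $\mathcal M',\mathcal N'\in\mathcal H'$ with the same universe, $\overline\alpha(\mathcal M')=\overline\alpha(\mathcal N')$ iff $\mathcal M'$ and $\mathcal N'$ interpret every relation symbol of $\mathcal L'$ identically. A totally bounded cover of $\mathcal H$ is a finite set $\{(\mathcal L_i,\mathcal H_i,\alpha_i):i\in[m]\}$ where each $\mathcal L_i$ is a finite language of relation and constant symbols, $\mathcal H_i$ is a totally bounded hereditary $\mathcal L_i$-property, $\alpha_i:\mathcal L\to\mathcal L_i$ is a relational interpretation with $\overline{\alpha_i}$ a relational interpretation of $\mathcal H_i$ in $\mathcal H$, and $\mathcal H=\mathcal F\cup\bigcup_{i=1}^m\{\overline{\alpha_i}(\mathcal N):\mathcal N\in\mathcal H_i\}$ for some trivial hereditary $\mathcal L$-property $\mathcal F$. *)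

(* Defs.v *)
From HB Require Import structures.
From mathcomp Require Import all_boot all_order all_algebra.
Set Implicit Arguments. Unset Strict Implicit. Unset Printing Implicit Defensive.

Record rlang := RLang { rk : nat; rar : 'I_rk -> nat }.

Record lang := Lang { base : rlang; ncst : nat }.
Arguments rar : clear implicits.

Definition lang_size (L : lang) : nat := rk (base L) + ncst L.

Definition rstruct (L : rlang) (n : nat) :=
  {dffun forall R : 'I_(rk L), {set (rar L R).-tuple 'I_n}}.

Definition struct (L : lang) (n : nat) :=
  (rstruct (base L) n * {ffun 'I_(ncst L) -> 'I_n})%type.

(* Pullback of the relations of a structure along f : 'I_m -> 'I_n
   (for injective f this is the induced substructure on the image of f,
   transported to the universe 'I_m). *)
Definition rpull (L : rlang) m n (f : 'I_m -> 'I_n) (M : rstruct L n) : rstruct L m :=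
  [ffun R => [set t : (rar L R).-tuple 'I_m | map_tuple f t \in M R]].

Definition rprop (L : rlang) := forall n, {set rstruct L n}.
Definition prop (L : lang) := forall n, {set struct L n}.

(* Hereditary: closed under isomorphism and substructures; both are captured by
   closure under pullback along injections. *)
Definition rhereditary (L : rlang) (H : rprop L) : Prop :=
  forall m n (f : 'I_m -> 'I_n), injective f ->
    forall M, M \in H n -> rpull f M \in H m.

Definition hereditary (L : lang) (H : prop L) : Prop :=
  forall m n (f : 'I_m -> 'I_n), injective f ->
    forall (M : struct L n) (M' : struct L m), M \in H n ->
      M'.1 = rpull f M.1 -> (forall c, f (M'.2 c) = M.2 c) -> M' \in H m.

Definition rtrivial (L : rlang) (H : rprop L) : Prop :=
  exists N, forall n, N <= n -> H n = set0.

Definition totally_bounded (L : lang) (H : prop L) : Prop :=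
  exists k, forall n (M : struct L n), M \in H n ->
    forall (R : 'I_(rk (base L))) (I : {set 'I_(rar (base L) R)}),
      I != set0 -> I != setT ->
      forall t : (rar (base L) R).-tuple 'I_n,
        #|[set u in M.1 R | [forall i in I, tnth u i == tnth t i]]| < k.

Inductive term (nv nc : nat) :=
  | TVar of 'I_nv
  | TCst of 'I_nc.

Inductive formula (L : lang) (nv : nat) :=
  | FRel (R : 'I_(rk (base L))) of ('I_(rar (base L) R) -> term nv (ncst L))
  | FEq of term nv (ncst L) & term nv (ncst L)
  | FTrue
  | FNot of formula L nv
  | FAnd of formula L nv & formula L nv
  | FOr of formula L nv & formula L nv.

Definition evalt (L : lang) n nv (M : struct L n) (v : 'I_nv -> 'I_n)
  (t : term nv (ncst L)) : 'I_n :=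
  match t with TVar i => v i | TCst c => M.2 c end.

Fixpoint evalf (L : lang) n nv (M : struct L n) (v : 'I_nv -> 'I_n)
  (f : formula L nv) : bool :=
  match f with
  | FRel R args => [tuple evalt M v (args i) | i < rar (base L) R] \in M.1 R
  | FEq a b => evalt M v a == evalt M v b
  | FTrue => true
  | FNot g => ~~ evalf M v g
  | FAnd g h => evalf M v g && evalf M v h
  | FOr g h => evalf M v g || evalf M v h
  end.

Definition rinterp (L : rlang) (L' : lang) :=
  forall R : 'I_(rk L), formula L' (rar L R).

Definition interp (L : rlang) (L' : lang) (alpha : rinterp L L') n
  (N : struct L' n) : rstruct L n :=
  [ffun R => [set t : (rar L R).-tuple 'I_n | evalf N (tnth t) (alpha R)]].

Definition is_rel_interp (L : rlang) (L' : lang) (alpha : rinterp L L')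
  (H' : prop L') (H : rprop L) : Prop :=
  (forall n (N : struct L' n), N \in H' n -> interp alpha N \in H n) /\
  (forall n (M N : struct L' n), M \in H' n -> N \in H' n ->
     (interp alpha M = interp alpha N <-> M.1 = N.1)).

Definition tb_cover (L : rlang) (H : rprop L) (m : nat)
  (Ls : 'I_m -> lang) (Hs : forall i, prop (Ls i))
  (alphas : forall i, rinterp L (Ls i)) : Prop :=
  (forall i, hereditary (Hs i) /\ totally_bounded (Hs i) /\
             is_rel_interp (alphas i) (Hs i) H) /\
  exists F : rprop L, rhereditary F /\ rtrivial F /\
    forall n, H n = F n :|: \bigcup_(i < m) [set interp (alphas i) N | N in Hs i n].

(* Main.v *)
Require Import Defs.
From HB Require Import structures.
From mathcomp Require Import all_boot all_order all_algebra.
Import GRing.Theory Num.Theory.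

Lemma card_bigcup_ord (T : finType) m (A : 'I_m -> {set T}) :
  #|\bigcup_(i < m) A i| <= \sum_(i < m) #|A i|.
Proof.
elim: m A => [|m IH] A; first by rewrite !big_ord0 cards0.
rewrite big_ord_recr big_ord_recr /=.
apply: leq_trans (leq_card_setU _ _) _.
by rewrite leq_add2r IH.
Qed.

Lemma key_bound (L : rlang) (H : rprop L) (L' : lang) (H' : prop L')
  (alpha : rinterp L L') n :
  is_rel_interp alpha H' H ->
  #|H' n| <= #|H n| * n ^ ncst L'.
Proof.
move=> [Hin Hinj].
pose f := fun N : struct L' n => (interp alpha N, N.2).
have inj : {in H' n &, injective f}.
  move=> M N HM HN [e1 e2].
  have e := (proj1 (Hinj n M N HM HN) e1).
  by move: M N e e2 {HM HN e1} => [M1 M2] [N1 N2] /= -> ->.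
rewrite -(card_in_imset inj).
apply: leq_trans (subset_leq_card (_ : f @: H' n \subset setX (H n) setT)) _.
  apply/subsetP => _ /imsetP [N HN ->].
  by rewrite inE /= in_setT andbT Hin.
by rewrite cardsX cardsT card_ffun !card_ord.
Qed.

Theorem mainTheorem14 (L : rlang) (H : rprop L) (m : nat)
  (Ls : 'I_m -> lang) (Hs : forall i, prop (Ls i))
  (alphas : forall i, rinterp L (Ls i)) :
  0 < m ->
  rhereditary H ->
  tb_cover H Hs alphas ->
  let c := \max_(j < m) lang_size (Ls j) in
  exists N, forall n, N <= n ->
    ((n%:R : rat) ^- c * (\max_(j < m) #|Hs j n|)%:R <= (#|H n|)%:R)%R /\
    #|H n| <= \sum_(j < m) #|Hs j n|.
Proof.
move=> m0 _ [Hi [F [_ [[N0 HN0] Heq]]]] c.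
exists (maxn N0 1) => n; rewrite geq_max => /andP [nN0 n1].
split.
  have m0' : 0 < #|'I_m| by rewrite card_ord.
  have [j ->] := @eq_bigmax _ (fun j => #|Hs j n|) m0'.
  have kb := key_bound _ _ _ _ _ n (proj2 (proj2 (Hi j))).
  have cj : ncst (Ls j) <= c.
    apply: leq_trans (leq_bigmax j); by rewrite /lang_size leq_addl.
  have kb2 : #|Hs j n| <= #|H n| * n ^ c.
    apply: leq_trans kb _; rewrite leq_mul2l; apply/orP; right.
    by rewrite leq_pexp2l.
  have np : (0 < (n%:R : rat) ^+ c)%R by rewrite exprn_gt0 // ltr0n.
  rewrite mulrC ler_pdivrMr //.
  by rewrite -natrX -natrM ler_nat.
rewrite Heq HN0 // set0U.
apply: leq_trans (card_bigcup_ord _ _ _) _.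
by apply: leq_sum => i _; apply: leq_imset_card.
Qed.
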